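(* Let $x_i,y_i\in\mathbb{Z}$ ($1\le i\le N$) with $x_i\le x_{i+1}$ and $y_i\le y_{i+1}$ for all $i$. For $\sigma\in\mathbb{S}_N$ define the Laurent monomial $$h_\sigma(\xi_1,\dots,\xi_N)=\prod_{(b,a)}\frac{\xi_a}{\xi_b}\prod_{i=1}^N\xi_{\sigma(i)}^{\,x_i-y_{\sigma(i)}-1},$$ the first product over all inversions $(b,a)$ of $\sigma$, and for $\gamma\in\{1,\dots,N\}$ let $h^\gamma_\sigma$ be the function of $\eta$ and $\xi_\delta$ ($\delta\ne\gamma$) obtained by substituting $\xi_\gamma=\eta/\prod_{\delta\ne\gamma}\xi_\delta$ into $h_\sigma$. (i) If $\sigma,\sigma'\in\mathbb{S}_N$ differ only by an interchange of two adjacent entries $\alpha$ and $\beta$, and $\gamma\ne\alpha,\beta$, then $h^\gamma_\sigma|_{\xi_\alpha=\xi_\beta}=h^\gamma_{\sigma'}|_{\xi_\alpha=\xi_\beta}$. (ii) If moreover $\gamma$ appears to the left of $\alpha$ and $\beta$ and $\gamma>\alpha,\beta$, then the exponents of $\xi_\alpha$ and of $\xi_\beta$ in $h^\gamma_\sigma$ and in $h^\gamma_{\sigma'}$ are greater than or equal to $2$.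
   Context: Permutations are in one-line notation $\sigma(1)\cdots\sigma(N)$; an inversion $(b,a)$ of $\sigma$ is a pair of entries with $b>a$ and $b$ appearing to the left of $a$ in $\sigma$. *)

(* Defs.v *)
(* Laurent monomials are represented by their integer
   exponent vectors. Indices 1..N of the paper are 'I_N (0-based). *)
From mathcomp Require Import all_boot all_order all_algebra all_fingroup.
Set Implicit Arguments. Unset Strict Implicit. Unset Printing Implicit Defensive.
Import Order.TTheory GRing.Theory Num.Theory.
Local Open Scope ring_scope.

(* exponent of xi_c in h_sigma:
   inversions (b,a) = (sigma i, sigma j) with i < j, sigma i > sigma j,
   each contributing xi_a / xi_b; plus the factor
   prod_i xi_{sigma i}^(x_i - y_{sigma i} - 1), whose xi_c exponent is
   x_{sigma^-1 c} - y_c - 1. *)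
Definition hexp (N : nat) (x y : 'I_N -> int) (s : 'S_N) (c : 'I_N) : int :=
  (\sum_(i < N) \sum_(j < N | (i < j)%N && (s j < s i)%N)
      (((c == s j)%:Z) - ((c == s i)%:Z)))
  + (x ((s^-1)%g c) - y c - 1).

(* h^gamma_sigma : Laurent monomial in the variables eta (= None) and
   xi_delta (= Some delta, delta != gamma), obtained from h_sigma by
   xi_gamma := eta / prod_{delta != gamma} xi_delta. *)
Definition hgam (N : nat) (x y : 'I_N -> int) (s : 'S_N) (g : 'I_N)
  : {ffun option 'I_N -> int} :=
  [ffun v => match v with
             | None => hexp x y s g
             | Some d => if d == g then 0 else hexp x y s d - hexp x y s g
             end].

(* Specialization xi_alpha = xi_beta of a Laurent monomial in eta, xi's:
   xi_beta disappears and its exponent is added to that of xi_alpha. *)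
Definition spec_eq (N : nat) (a b : 'I_N) (m : {ffun option 'I_N -> int})
  : {ffun option 'I_N -> int} :=
  [ffun v => match v with
             | None => m None
             | Some d => if d == b then 0
                         else if d == a then m (Some a) + m (Some b)
                         else m (Some d)
             end].

(* Main.v *)
Require Import Defs.
From mathcomp Require Import all_boot all_order all_algebra all_fingroup zify.
Import Order.TTheory GRing.Theory Num.Theory.
Set Implicit Arguments. Unset Strict Implicit. Unset Printing Implicit Defensive.
Local Open Scope ring_scope.

Lemma collapse N (F : 'I_N -> bool) (t : 'S_N) c :
  \sum_(j < N) (if F j then ((c == t j) : nat)%:Z else 0) = (F ((t^-1)%g c) : nat)%:Z.
Proof.
rewrite (bigD1 ((t^-1)%g c)) //= permKV eqxx big1 ?addr0; first by case: (F _).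
move=> j hj; case: (F j) => //; case: eqP => // e.
by move: hj; rewrite e permK eqxx.
Qed.

Lemma Dsum N (t : 'S_N) c :
  \sum_(i < N) \sum_(j < N | (i < j)%N && (t j < t i)%N)
      (((c == t j) : nat)%:Z - ((c == t i) : nat)%:Z)
  = \sum_(i < N) ((((i < (t^-1)%g c)%N && (c < t i)%N) : nat)%:Z
                  - ((((t^-1)%g c < i)%N && (t i < c)%N) : nat)%:Z).
Proof.
have E : forall i : 'I_N, \sum_(j < N | (i < j)%N && (t j < t i)%N)
      (((c == t j) : nat)%:Z - ((c == t i) : nat)%:Z) =
   \sum_(j < N) (if (i < j)%N && (t j < t i)%N then ((c == t j) : nat)%:Z else 0) -
   \sum_(j < N) (if (i < j)%N && (t j < t i)%N then ((c == t i) : nat)%:Z else 0).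
  move=> i; rewrite big_mkcond /= -sumrB; apply: eq_bigr => j _.
  by case: ifP; rewrite ?subr0.
rewrite (eq_bigr _ (fun i _ => E i)) !sumrB; congr (_ + - _).
  apply: eq_bigr => i _.
  have := @collapse N (fun j : 'I_N => (i < j)%N && (t j < t i)%N) t c; rewrite /= permKV => <-; done.
rewrite exchange_big /=; apply: eq_bigr => i _.
have := @collapse N (fun j : 'I_N => (j < i)%N && (t i < t j)%N) t c; rewrite /= permKV => <-; done.
Qed.

Definition Dt N (t : 'S_N) (c : 'I_N) : int :=
  \sum_(i < N) ((((i < (t^-1)%g c)%N && (c < t i)%N) : nat)%:Z
                  - ((((t^-1)%g c < i)%N && (t i < c)%N) : nat)%:Z).

Lemma hexpE N (x y : 'I_N -> int) t c :
  hexp x y t c = Dt t c + (x ((t^-1)%g c) - y c - 1).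
Proof. by rewrite /hexp Dsum. Qed.

Lemma term_ge0 (a b c d : bool) : (c -> a) -> (b -> d) ->
  0 <= (a : nat)%:Z - (b : nat)%:Z - ((c : nat)%:Z - (d : nat)%:Z).
Proof. by case: a; case: b; case: c; case: d => //= h1 h2; first [have := h1 isT | have := h2 isT]. Qed.

Lemma Dgap N (t : 'S_N) c g : ((t^-1)%g g < (t^-1)%g c)%N -> (c < g)%N ->
  2 <= Dt t c - Dt t g.
Proof.
move=> hp hv; rewrite /Dt -sumrB.
have ne : (t^-1)%g c != (t^-1)%g g by apply/eqP => e; rewrite e ltnn in hp.
rewrite (bigD1 ((t^-1)%g g)) //= (bigD1 ((t^-1)%g c)) /=; last by rewrite ne.
have h2 : ((t^-1)%g c < (t^-1)%g g)%N = false by rewrite ltnNge ltnW.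
rewrite !permKV hp hv h2 !ltnn /=.
set S := \sum_(_ < _ | _) _.
suff : 0 <= S by lia.
apply: sumr_ge0 => i _; apply: term_ge0.
  by case/andP => h1 h3; rewrite (ltn_trans h1 hp) (ltn_trans hv h3).
by case/andP => h1 h3; rewrite (ltn_trans hp h1) (ltn_trans h3 hv).
Qed.

Lemma lt_tperm N (p q : 'I_N) : val q = (val p).+1 -> forall i j : 'I_N,
  ~~ ((i == p) && (j == q)) -> ~~ ((i == q) && (j == p)) ->
  (tperm p q i < tperm p q j)%N = (i < j)%N.
Proof.
move=> hpq i j.
have E : forall a b : 'I_N, (a == b) = (nat_of_ord a == nat_of_ord b) by [].
have {}hpq : nat_of_ord q = (nat_of_ord p).+1 by [].
case: (tpermP p q i) => [->|->|/eqP hip /eqP hiq];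
case: (tpermP p q j) => [->|->|/eqP hjp /eqP hjq];
rewrite ?E; try lia;
repeat match goal with H : is_true (_ != _) |- _ => move: H; rewrite E => H end; lia.
Qed.

Lemma hgap N (x y : 'I_N -> int)
  (hx : forall i j : 'I_N, (i <= j)%N -> x i <= x j)
  (hy : forall i j : 'I_N, (i <= j)%N -> y i <= y j) (t : 'S_N) c g :
  ((t^-1)%g g < (t^-1)%g c)%N -> (c < g)%N -> 2 <= hexp x y t c - hexp x y t g.
Proof.
move=> hp hv; rewrite !hexpE.
have := Dgap hp hv; have := hx _ _ (ltnW hp); have := hy _ _ (ltnW hv); lia.
Qed.

Lemma Dre N (s s' : 'S_N) (p q : 'I_N) (hs' : forall i : 'I_N, s' i = s (tperm p q i)) c :
  Dt s' c = \sum_(i < N) ((((tperm p q i < tperm p q ((s^-1)%g c))%N && (c < s i)%N) : nat)%:Z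
                  - (((tperm p q ((s^-1)%g c) < tperm p q i)%N && (s i < c)%N) : nat)%:Z).
Proof.
have hinv : (s'^-1)%g c = tperm p q ((s^-1)%g c).
  by apply: (@perm_inj _ s'); rewrite permKV hs' tpermK permKV.
rewrite /Dt hinv (reindex_inj (@perm_inj _ (tperm p q))) /=.
by apply: eq_bigr => i _; rewrite hs' tpermK.
Qed.

Theorem lemma3p6 (N : nat) (x y : 'I_N -> int)
  (hx : forall i j : 'I_N, (i <= j)%N -> x i <= x j)
  (hy : forall i j : 'I_N, (i <= j)%N -> y i <= y j)
  (s s' : 'S_N) (p q : 'I_N) (hpq : val q = (val p).+1)
  (hs' : forall i : 'I_N, s' i = s (tperm p q i))
  (al be ga : 'I_N) (hal : s p = al) (hbe : s q = be)
  (hga_a : ga != al) (hga_b : ga != be) :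
  spec_eq al be (hgam x y s ga) = spec_eq al be (hgam x y s' ga) /\
  (((val ((s^-1)%g ga) < val p)%N /\ (val al < val ga)%N /\ (val be < val ga)%N) ->
     [/\ 2 <= hgam x y s ga (Some al), 2 <= hgam x y s ga (Some be),
         2 <= hgam x y s' ga (Some al) & 2 <= hgam x y s' ga (Some be)]).
Proof.
have hinv : forall c, (s'^-1)%g c = tperm p q ((s^-1)%g c).
  by move=> c; apply: (@perm_inj _ s'); rewrite permKV hs' tpermK permKV.
have Pal : (s^-1)%g al = p by rewrite -hal permK.
have Pbe : (s^-1)%g be = q by rewrite -hbe permK.
have ltpq : (p < q)%N by rewrite /= hpq.
have nqp : (q < p)%N = false by rewrite ltnNge ltnW.
have npq : p != q by apply/eqP => e; rewrite e ltnn in ltpq.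
have L1 : forall c, c != al -> c != be -> hexp x y s' c = hexp x y s c.
  move=> c ha hb.
  have hP : (s^-1)%g c != p by apply: contra ha => /eqP e; rewrite -hal -e permKV.
  have hQ : (s^-1)%g c != q by apply: contra hb => /eqP e; rewrite -hbe -e permKV.
  rewrite !hexpE hinv tpermD 1?eq_sym //; congr (_ + _).
  rewrite (Dre hs'); apply: eq_bigr => i _.
  by rewrite !lt_tperm // ?(negbTE hP) ?(negbTE hQ) ?andbF.
have L2 : hexp x y s' al + hexp x y s' be = hexp x y s al + hexp x y s be.
  rewrite !hexpE !hinv Pal Pbe tpermL tpermR.
  suff : Dt s' al + Dt s' be = Dt s al + Dt s be by lia.
  rewrite !(Dre hs') /Dt Pal Pbe -!big_split /=.
  rewrite (bigD1 p) //= [RHS](bigD1 p) //= (bigD1 q) /=; last by rewrite eq_sym npq.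
  rewrite [X in _ = _ + X](bigD1 q) /=; last by rewrite eq_sym npq.
  rewrite !tpermL !tpermR hal hbe !ltnn ltpq nqp /= !addrA; congr (_ + _).
    by case: (al < be)%N; case: (be < al)%N.
  apply: eq_bigr => i /andP [hip hiq].
  have E : forall a b : 'I_N, (a == b) = (nat_of_ord a == nat_of_ord b) by [].
  have hpq' : nat_of_ord q = (nat_of_ord p).+1 by [].
  move: hip hiq; rewrite !E => hip hiq.
  have h1 : (i < q)%N = (i < p)%N by lia.
  have h2 : (q < i)%N = (p < i)%N by lia.
  by rewrite tpermD 1?eq_sym // h1 h2.
have nag : (al == ga) = false by rewrite eq_sym (negbTE hga_a).
have nbg : (be == ga) = false by rewrite eq_sym (negbTE hga_b).
have Lg := L1 ga hga_a hga_b.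
split.
  apply/ffunP => v; rewrite !ffunE; case: v => [d|] /=; last by rewrite ?ffunE /= Lg.
  case: ifP => // hdb; rewrite ?ffunE /=.
  case: ifP => [/eqP hda|hda]; first by rewrite nag nbg Lg; lia.
  case: ifP => // _.
  by rewrite Lg L1 ?hda ?hdb.
move=> [hr [ha hb]]; rewrite !ffunE /= nag nbg.
have hr' : ((s^-1)%g ga < q)%N by apply: ltn_trans hr ltpq.
have rp : (s^-1)%g ga != p by apply/eqP => e; rewrite e ltnn in hr.
have rq : (s^-1)%g ga != q by apply/eqP => e; rewrite e ltnn in hr'.
have hg' : (s'^-1)%g ga = (s^-1)%g ga by rewrite hinv tpermD // eq_sym.
split; apply: hgap => //.
- by rewrite Pal.
- by rewrite Pbe.
- by rewrite hg' hinv Pal tpermL.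
- by rewrite hg' hinv Pbe tpermR.
Qed.
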